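(* Let $E$ be an arbitrary graph satisfying Condition (L), $X\subseteq{\rm Reg}(E)$ and $Y={\rm Reg}(E)\setminus X$. Let $A$ be a ring and $\pi:C_K^X(E)\to A$ a ring homomorphism such that $\pi(u)\ne0$ for every $u\in E^0$ and $\pi\big(v-\sum_{e\in s^{-1}(v)}ee^*\big)\ne 0$ for every $v\in Y$. Then $\pi$ is injective.
   Context: Let $K$ be a field and $E=(E^0,E^1,r,s)$ a directed graph (no countability or finiteness assumptions). A vertex $v$ is regular if $s^{-1}(v)$ is finite and nonempty; ${\rm Reg}(E)$ is the set of regular vertices. For $X\subseteq{\rm Reg}(E)$, the relative Cohn path algebra $C_K^X(E)$ is the free $K$-algebra generated by $E^0\cup E^1\cup\{e^*:e\in E^1\}$ subject to: $vw=\delta_{v,w}v$; $s(e)e=er(e)=e$ and $r(e)e^*=e^*s(e)=e^*$; $e^*f=\delta_{e,f}r(e)$; $v=\sum_{e\in s^{-1}(v)}ee^*$ for every $v\in X$. A cycle is a path $e_1\cdots e_n$ ($n\ge1$) with $r(e_n)=s(e_1)$ and $s(e_i)\ne s(e_j)$ for $i\ne j$. An exit of $e_1\cdots e_n$ is an edge $e$ with $s(e)=s(e_i)$ for some $i$ and $e\ne e_i$. $E$ satisfies Condition (L) if every cycle in $E$ has an exit. *)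

(* Defs.v *)
From HB Require Import structures.
From mathcomp Require Import all_boot all_order all_algebra.
From Stdlib Require Import List.
Set Implicit Arguments. Unset Strict Implicit. Unset Printing Implicit Defensive.
Import GRing.Theory.
Local Open Scope ring_scope.

(** Rings are NOT assumed unital (C_K^X(E) is unital only when E^0 is finite).
    A (possibly non-unital) ring: an additive abelian group with an associative,
    biadditive multiplication. *)
Record nuring := NURing {
  nr_sort :> zmodType;
  nr_mul : nr_sort -> nr_sort -> nr_sort;
  nr_mulA : forall x y z, nr_mul x (nr_mul y z) = nr_mul (nr_mul x y) z;
  nr_mulDl : forall x y z, nr_mul (x + y) z = nr_mul x z + nr_mul y z;
  nr_mulDr : forall x y z, nr_mul x (y + z) = nr_mul x y + nr_mul x z }.

Record nualg (K : fieldType) := NUAlg {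
  na_sort :> lmodType K;
  na_mul : na_sort -> na_sort -> na_sort;
  na_mulA : forall x y z, na_mul x (na_mul y z) = na_mul (na_mul x y) z;
  na_mulDl : forall x y z, na_mul (x + y) z = na_mul x z + na_mul y z;
  na_mulDr : forall x y z, na_mul x (y + z) = na_mul x y + na_mul x z;
  na_scalerAl : forall (a : K) x y, a *: na_mul x y = na_mul (a *: x) y;
  na_scalerAr : forall (a : K) x y, a *: na_mul x y = na_mul x (a *: y) }.

Definition nualg_ring (K : fieldType) (C : nualg K) : nuring :=
  @NURing (na_sort C) (@na_mul K C) (@na_mulA K C) (@na_mulDl K C) (@na_mulDr K C).

Definition ring_hom (R S : nuring) (f : R -> S) : Prop :=
  (forall x y, f (x + y) = f x + f y) /\
  (forall x y, f (nr_mul x y) = nr_mul (f x) (f y)).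

Definition alg_hom (K : fieldType) (B C : nualg K) (f : B -> C) : Prop :=
  (forall x y, f (x + y) = f x + f y) /\
  (forall (a : K) x, f (a *: x) = a *: f x) /\
  (forall x y, f (na_mul x y) = na_mul (f x) (f y)).

Section Graph.
Variables (E0 E1 : Type) (r s : E1 -> E0).

Definition enumerates_out (v : E0) (l : list E1) : Prop :=
  NoDup l /\ (forall e, In e l <-> s e = v).

Definition regular (v : E0) : Prop :=
  exists l, enumerates_out v l /\ l <> nil.

Fixpoint path_chain (p : list E1) : Prop :=
  match p with
  | e :: ((f :: _) as q) => r e = s f /\ path_chain q
  | _ => True
  end.

Definition is_cycle (p : list E1) : Prop :=
  match p with
  | nil => False
  | e1 :: _ => path_chain p /\ r (last p e1) = s e1 /\ NoDup (map s p)
  end.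

Definition is_exit (p : list E1) (e : E1) : Prop :=
  exists f, In f p /\ s e = s f /\ e <> f.

Definition condition_L : Prop :=
  forall p, is_cycle p -> exists e, is_exit p e.

Definition cohn_family (K : fieldType) (X : E0 -> Prop) (B : nualg K)
    (pv : E0 -> B) (pe pes : E1 -> B) : Prop :=
  (forall v, na_mul (pv v) (pv v) = pv v) /\
  (forall v w, v <> w -> na_mul (pv v) (pv w) = 0) /\
  (forall e, na_mul (pv (s e)) (pe e) = pe e) /\
  (forall e, na_mul (pe e) (pv (r e)) = pe e) /\
  (forall e, na_mul (pv (r e)) (pes e) = pes e) /\
  (forall e, na_mul (pes e) (pv (s e)) = pes e) /\
  (forall e, na_mul (pes e) (pe e) = pv (r e)) /\
  (forall e f, e <> f -> na_mul (pes e) (pe f) = 0) /\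
  (forall v, X v -> forall l, enumerates_out v l ->
       pv v = \sum_(e <- l) na_mul (pe e) (pes e)).

(** (C, cv, ce, ces) is the relative Cohn path algebra C_K^X(E):
    the free K-algebra on E^0 ∪ E^1 ∪ E^1* modulo the Cohn relations,
    characterised by its universal property. *)
Definition is_rel_cohn_path_algebra (K : fieldType) (X : E0 -> Prop)
    (C : nualg K) (cv : E0 -> C) (ce ces : E1 -> C) : Prop :=
  cohn_family X cv ce ces /\
  (forall (B : nualg K) (bv : E0 -> B) (be bes : E1 -> B),
      cohn_family X bv be bes ->
      exists phi : C -> B, alg_hom phi /\
        (forall v, phi (cv v) = bv v) /\
        (forall e, phi (ce e) = be e) /\
        (forall e, phi (ces e) = bes e)) /\
  (forall (B : nualg K) (phi psi : C -> B), alg_hom phi -> alg_hom psi ->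
      (forall v, phi (cv v) = psi (cv v)) ->
      (forall e, phi (ce e) = psi (ce e)) ->
      (forall e, phi (ces e) = psi (ces e)) ->
      forall x, phi x = psi x).

End Graph.

(* Main.v *)
Require Import Defs.
From HB Require Import structures.
From mathcomp Require Import all_boot all_order all_algebra.
From Stdlib Require Import List Classical ClassicalEpsilon Lia.
From mathcomp Require Import zify.
Set Implicit Arguments. Unset Strict Implicit. Unset Printing Implicit Defensive.
Import GRing.Theory.
Local Open Scope ring_scope.

Section Alg.
Variables (K : fieldType) (C : nualg K).
Local Notation "x ** y" := (@na_mul K C x y) (at level 40, left associativity).

Lemma mA (x y z : C) : x ** (y ** z) = x ** y ** z. Proof. exact: na_mulA. Qed.
Lemma m0l (x : C) : 0 ** x = 0.
Proof. have H := @na_mulDl K C 0 0 x; rewrite addr0 in H. apply: (addrI (0 ** x)). by rewrite addr0 -H. Qed.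
Lemma m0r (x : C) : x ** 0 = 0.
Proof. have H := @na_mulDr K C x 0 0; rewrite addr0 in H. apply: (addrI (x ** 0)). by rewrite addr0 -H. Qed.
Lemma mNl (x y : C) : (- x) ** y = - (x ** y).
Proof. apply/eqP; rewrite -subr_eq0 opprK -na_mulDl addNr m0l //. Qed.
Lemma mNr (x y : C) : x ** (- y) = - (x ** y).
Proof. apply/eqP; rewrite -subr_eq0 opprK -na_mulDr addNr m0r //. Qed.
Lemma mDl (x y z : C) : (x + y) ** z = x ** z + y ** z. Proof. exact: na_mulDl. Qed.
Lemma mDr (x y z : C) : x ** (y + z) = x ** y + x ** z. Proof. exact: na_mulDr. Qed.
Lemma mBl (x y z : C) : (x - y) ** z = x ** z - y ** z. Proof. by rewrite mDl mNl. Qed.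
Lemma mBr (x y z : C) : x ** (y - z) = x ** y - x ** z. Proof. by rewrite mDr mNr. Qed.
Lemma mZl (a : K) (x y : C) : (a *: x) ** y = a *: (x ** y). Proof. by rewrite na_scalerAl. Qed.
Lemma mZr (a : K) (x y : C) : x ** (a *: y) = a *: (x ** y). Proof. by rewrite na_scalerAr. Qed.
Lemma msuml (I : Type) (l : list I) (F : I -> C) (y : C) :
  (\sum_(i <- l) F i) ** y = \sum_(i <- l) (F i ** y).
Proof. elim: l => [|a l IH]; first by rewrite !big_nil m0l. by rewrite !big_cons mDl IH. Qed.
Lemma msumr (I : Type) (l : list I) (F : I -> C) (y : C) :
  y ** (\sum_(i <- l) F i) = \sum_(i <- l) (y ** F i).
Proof. elim: l => [|a l IH]; first by rewrite !big_nil m0r. by rewrite !big_cons mDr IH. Qed.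
End Alg.

Section DD.
Variable T : Type.
Fixpoint dd (l : list T) : list T :=
  match l with
  | nil => nil
  | a :: l' => if excluded_middle_informative (In a l') then dd l' else a :: dd l'
  end.
Lemma dd_In l x : In x (dd l) <-> In x l.
Proof.
elim: l => [|a l IH] //=.
case: excluded_middle_informative => H /=; rewrite IH; split; try tauto.
by case=> [<-|//].
Qed.
Lemma dd_NoDup l : NoDup (dd l).
Proof.
elim: l => [|a l IH] /=; first constructor.
case: excluded_middle_informative => H //; constructor => //; by rewrite dd_In.
Qed.
End DD.
Arguments dd {T} l.
Section Gen.
Variables (K : fieldType) (E0 E1 : Type) (r s : E1 -> E0) (X : E0 -> Prop)
  (C : nualg K) (cv : E0 -> C) (ce ces : E1 -> C).
Hypothesis HF : cohn_family r s X cv ce ces.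
Local Notation "x ** y" := (@na_mul K C x y) (at level 40, left associativity).

Lemma g_vv v : cv v ** cv v = cv v. Proof. by move: HF; rewrite /cohn_family => -[H _]. Qed.
Lemma g_vw v w : v <> w -> cv v ** cv w = 0. Proof. by move: HF; rewrite /cohn_family => -[_ [H _]]; exact: H. Qed.
Lemma g_se e : cv (s e) ** ce e = ce e. Proof. by move: HF; rewrite /cohn_family => -[_ [_ [H _]]]. Qed.
Lemma g_er e : ce e ** cv (r e) = ce e. Proof. by move: HF; rewrite /cohn_family => -[_ [_ [_ [H _]]]]. Qed.
Lemma g_res e : cv (r e) ** ces e = ces e. Proof. by move: HF; rewrite /cohn_family => -[_ [_ [_ [_ [H _]]]]]. Qed.
Lemma g_ess e : ces e ** cv (s e) = ces e. Proof. by move: HF; rewrite /cohn_family => -[_ [_ [_ [_ [_ [H _]]]]]]. Qed.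
Lemma g_ee e : ces e ** ce e = cv (r e). Proof. by move: HF; rewrite /cohn_family => -[_ [_ [_ [_ [_ [_ [H _]]]]]]]. Qed.
Lemma g_ef e f : e <> f -> ces e ** ce f = 0. Proof. by move: HF; rewrite /cohn_family => -[_ [_ [_ [_ [_ [_ [_ [H _]]]]]]]]; exact: H. Qed.
Lemma g_rel v : X v -> forall l, enumerates_out s v l ->
       cv v = \sum_(e <- l) (ce e ** ces e).
Proof. by move: HF; rewrite /cohn_family => -[_ [_ [_ [_ [_ [_ [_ [_ H]]]]]]]]; exact: H. Qed.

Lemma g_ve v e : v <> s e -> cv v ** ce e = 0.
Proof. move=> H; by rewrite -g_se mA g_vw // m0l. Qed.
Lemma g_ev e v : v <> r e -> ce e ** cv v = 0.
Proof. move=> H; by rewrite -g_er -mA g_vw ?m0r // => /esym. Qed.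
Lemma g_vs v e : v <> r e -> cv v ** ces e = 0.
Proof. move=> H; by rewrite -g_res mA g_vw // m0l. Qed.
Lemma g_sv e v : v <> s e -> ces e ** cv v = 0.
Proof. move=> H; by rewrite -g_ess -mA g_vw ?m0r // => /esym. Qed.

Fixpoint R (mu : list E1) (a : C) : C :=
  match mu with nil => a | e :: mu' => ce e ** R mu' a end.
Fixpoint Gx (a : C) (nu : list E1) : C :=
  match nu with nil => a | e :: nu' => Gx a nu' ** ces e end.
Definition mono mu u nu := R mu (Gx (cv u) nu).
Definition hv (nu : list E1) (u : E0) := match nu with nil => u | f :: _ => s f end.

Lemma R_mulr mu a b : R mu (a ** b) = R mu a ** b.
Proof. elim: mu => [|e mu IH] //=; by rewrite IH mA. Qed.
Lemma R_cat mu mu' a : R (mu ++ mu') a = R mu (R mu' a).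
Proof. elim: mu => [|e mu IH] //=; by rewrite IH. Qed.
Lemma R_add mu a b : R mu (a + b) = R mu a + R mu b.
Proof. elim: mu => [|e mu IH] //=; by rewrite IH mDr. Qed.
Lemma R_0 mu : R mu 0 = 0.
Proof. elim: mu => [|e mu IH] //=; by rewrite IH m0r. Qed.
Lemma R_Z mu k a : R mu (k *: a) = k *: R mu a.
Proof. elim: mu => [|e mu IH] //=; by rewrite IH mZr. Qed.
Lemma Gx_mull a b nu : Gx (a ** b) nu = a ** Gx b nu.
Proof. elim: nu => [|e nu IH] //=; by rewrite IH mA. Qed.
Lemma Gx_rcons a nu e : Gx a (nu ++ [:: e]) = Gx (a ** ces e) nu.
Proof. elim: nu => [|f nu IH] //=; by rewrite IH. Qed.
Lemma Gx_cvr u nu : Gx (cv u) nu ** cv (hv nu u) = Gx (cv u) nu.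
Proof. case: nu => [|e nu] /=; first exact: g_vv. by rewrite -mA g_ess. Qed.
Lemma Gx_cvr0 u nu w : w <> hv nu u -> Gx (cv u) nu ** cv w = 0.
Proof.
case: nu => [|e nu] /= H; first by apply: g_vw => /esym.
by rewrite -mA g_sv ?m0r.
Qed.
Lemma mono_cvr mu u nu : mono mu u nu ** cv (hv nu u) = mono mu u nu.
Proof. by rewrite /mono -R_mulr Gx_cvr. Qed.
Lemma mono_cvr0 mu u nu w : w <> hv nu u -> mono mu u nu ** cv w = 0.
Proof. by move=> H; rewrite /mono -R_mulr Gx_cvr0 // R_0. Qed.
Lemma mono_cer_nil_eq mu e : mono mu (s e) [::] ** ce e = mono (mu ++ [:: e]) (r e) [::].
Proof. by rewrite /mono /= -R_mulr g_se R_cat /= g_er. Qed.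
Lemma mono_cer_nil_neq mu u e : u <> s e -> mono mu u [::] ** ce e = 0.
Proof. by move=> H; rewrite /mono /= -R_mulr g_ve // R_0. Qed.
Lemma mono_cer_cons_eq mu u e nu : mono mu u (e :: nu) ** ce e = mono mu u nu ** cv (r e).
Proof. by rewrite /mono /= -!R_mulr -mA g_ee. Qed.
Lemma mono_cer_cons_neq mu u e f nu : f <> e -> mono mu u (f :: nu) ** ce e = 0.
Proof. by move=> H; rewrite /mono /= -!R_mulr -mA g_ef // m0r R_0. Qed.
Lemma mono_cons_ces mu u f nu : mono mu u (f :: nu) = mono mu u nu ** cv (r f) ** ces f.
Proof. by rewrite /mono /= -!R_mulr -mA g_res. Qed.

Lemma cvl_cons_eq e mu a : cv (s e) ** R (e :: mu) a = R (e :: mu) a.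
Proof. by rewrite /= mA g_se. Qed.
Lemma cvl_cons_neq v e mu a : v <> s e -> cv v ** R (e :: mu) a = 0.
Proof. by move=> H; rewrite /= mA g_ve // m0l. Qed.
Lemma cvl_nil v u nu : cv v ** Gx (cv u) nu = Gx (cv v ** cv u) nu.
Proof. by rewrite Gx_mull. Qed.
Lemma cesl_cons_eq e mu a : ces e ** R (e :: mu) a = cv (r e) ** R mu a.
Proof. by rewrite /= mA g_ee. Qed.
Lemma cesl_cons_neq e f mu a : e <> f -> ces e ** R (f :: mu) a = 0.
Proof. by move=> H; rewrite /= mA g_ef // m0l. Qed.
Lemma cesl_nil_eq e nu : ces e ** Gx (cv (s e)) nu = Gx (cv (r e)) (nu ++ [:: e]).
Proof. by rewrite -Gx_mull g_ess Gx_rcons g_res. Qed.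
Lemma cesl_nil_neq e u nu : u <> s e -> ces e ** Gx (cv u) nu = 0.
Proof. move=> H; rewrite -Gx_mull g_sv //. elim: nu => [|f nu IH] //=; by rewrite IH m0l. Qed.

Inductive InSpan (P : list E1 -> E0 -> list E1 -> Prop) : C -> Prop :=
 | sp0 : InSpan P 0
 | spA x y : InSpan P x -> InSpan P y -> InSpan P (x + y)
 | spM k mu u nu : P mu u nu -> InSpan P (k *: mono mu u nu).

Lemma spZ P k x : InSpan P x -> InSpan P (k *: x).
Proof.
elim=> [|x1 y1 _ H1 _ H2|k' mu u nu HP]; first by rewrite scaler0; constructor.
  by rewrite scalerDr; constructor.
by rewrite scalerA; constructor.
Qed.
Lemma spN P x : InSpan P x -> InSpan P (- x).
Proof. by move=> H; rewrite -scaleN1r; apply: spZ. Qed.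
Lemma spB P x y : InSpan P x -> InSpan P y -> InSpan P (x - y).
Proof. by move=> H1 H2; constructor => //; apply: spN. Qed.
Lemma spmono P mu u nu : P mu u nu -> InSpan P (mono mu u nu).
Proof. by move=> H; rewrite -(scale1r (mono mu u nu)); constructor. Qed.
Lemma spmon P Q x : (forall mu u nu, P mu u nu -> Q mu u nu) -> InSpan P x -> InSpan Q x.
Proof. move=> H; elim=> *; constructor; auto. Qed.

Lemma sp_map P Q (f : C -> C) x :
  (forall a b, f (a + b) = f a + f b) -> (forall k a, f (k *: a) = k *: f a) ->
  (forall mu u nu, P mu u nu -> InSpan Q (f (mono mu u nu))) ->
  InSpan P x -> InSpan Q (f x).
Proof.
move=> Hadd HZ Hm; elim=> [|x1 y1 _ H1 _ H2|k mu u nu HP].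
- have: f 0 = f 0 + f 0 by rewrite -Hadd addr0.
  move=> E; have -> : f 0 = 0 by apply: (addrI (f 0)); rewrite addr0 -E.
  constructor.
- rewrite Hadd; by constructor.
- rewrite HZ; apply: spZ; auto.
Qed.

Definition TT (mu : list E1) (u : E0) (nu : list E1) := True.

Lemma Gx_0 nu : Gx 0 nu = 0.
Proof. elim: nu => [|e nu IH] //=; by rewrite IH m0l. Qed.

Lemma cvl_mono v mu u nu : InSpan TT (cv v ** mono mu u nu).
Proof.
case: mu => [|e mu].
- rewrite /mono /= cvl_nil.
  case: (excluded_middle_informative (v = u)) => [->|H].
    by rewrite g_vv; exact: (@spmono TT [::] u nu).
  by rewrite g_vw // Gx_0; constructor.
- case: (excluded_middle_informative (v = s e)) => [->|H].
    by rewrite /mono cvl_cons_eq; exact: (@spmono TT (e :: mu) u nu I).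
  by rewrite /mono cvl_cons_neq //; constructor.
Qed.

Lemma left_cv v y : InSpan TT y -> InSpan TT (cv v ** y).
Proof.
apply: (@sp_map TT TT (fun z => cv v ** z)); [by move=> *; rewrite /= mDr | by move=> *; rewrite /= mZr | move=> *; exact: cvl_mono].
Qed.
Lemma left_ce e y : InSpan TT y -> InSpan TT (ce e ** y).
Proof.
apply: (@sp_map TT TT (fun z => ce e ** z)); [by move=> *; rewrite /= mDr | by move=> *; rewrite /= mZr | move=> mu u nu _].
by have -> : ce e ** mono mu u nu = mono (e :: mu) u nu by []; apply: spmono.
Qed.
Lemma left_ces e y : InSpan TT y -> InSpan TT (ces e ** y).
Proof.
apply: (@sp_map TT TT (fun z => ces e ** z)); [by move=> *; rewrite /= mDr | by move=> *; rewrite /= mZr | move=> mu u nu _].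
case: mu => [|f mu].
- rewrite /mono /=.
  case: (excluded_middle_informative (u = s e)) => [->|H].
    by rewrite cesl_nil_eq; exact: (@spmono TT [::] _ _).
  by rewrite cesl_nil_neq //; constructor.
- case: (excluded_middle_informative (e = f)) => [<-|H].
    rewrite /mono cesl_cons_eq; exact: cvl_mono.
  by rewrite /mono cesl_cons_neq //; constructor.
Qed.

Definition Qp (x : C) := InSpan TT x /\ forall y, InSpan TT y -> InSpan TT (x ** y).

Lemma Q0 : Qp 0.
Proof. split; first constructor. move=> y _; rewrite m0l; constructor. Qed.
Lemma Qlin k x y : Qp x -> Qp y -> Qp (k *: x + y).
Proof.
move=> [H1 H2] [H3 H4]; split; first by constructor => //; apply: spZ.
move=> z Hz; rewrite mDl mZl; constructor; [apply: spZ; auto | auto].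
Qed.
Lemma Qmul x y : Qp x -> Qp y -> Qp (x ** y).
Proof.
move=> [H1 H2] [H3 H4]; split; first by auto.
move=> z Hz; rewrite -mA; auto.
Qed.
Lemma Qcv v : Qp (cv v).
Proof. split; last by move=> y; apply: left_cv.
have -> : cv v = mono [::] v [::] by []. by apply: spmono. Qed.
Lemma Qce e : Qp (ce e).
Proof. split; last by move=> y; apply: left_ce.
have -> : ce e = mono [:: e] (r e) [::] by rewrite /mono /= g_er. by apply: spmono. Qed.
Lemma Qces e : Qp (ces e).
Proof. split; last by move=> y; apply: left_ces.
have -> : ces e = mono [::] (r e) [:: e] by rewrite /mono /= g_res. by apply: spmono. Qed.

Definition asb (P : Prop) : bool := if excluded_middle_informative P then true else false.
Lemma asbP P : asb P <-> P.
Proof. rewrite /asb; case: excluded_middle_informative => H; split => //. Qed.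

Definition Qb : pred C := fun x => asb (Qp x).
Lemma Qb_closed : submod_closed Qb.
Proof.
split; first by apply/asbP; exact: Q0.
move=> k u v /asbP Hu /asbP Hv; apply/asbP; exact: Qlin.
Qed.

Record SV := MkSV { svval : C; svP : Qb svval }.
HB.instance Definition _ := [isSub for svval].
HB.instance Definition _ := [Choice of SV by <:].
HB.instance Definition _ := GRing.isSubmodClosed.Build K C Qb Qb_closed.
HB.instance Definition _ := [SubChoice_isSubLmodule of SV by <:].

Lemma Qb_mul (x y : SV) : Qb (svval x ** svval y).
Proof. apply/asbP; apply: Qmul; apply/asbP; exact: svP. Qed.
Definition smul (x y : SV) : SV := @MkSV _ (Qb_mul x y).

Lemma smulA x y z : smul x (smul y z) = smul (smul x y) z.
Proof. apply: val_inj; exact: mA. Qed.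
Lemma smulDl x y z : smul (x + y) z = smul x z + smul y z.
Proof. apply: val_inj; exact: mDl. Qed.
Lemma smulDr x y z : smul x (y + z) = smul x y + smul x z.
Proof. apply: val_inj; exact: mDr. Qed.
Lemma sscAl (a : K) x y : a *: smul x y = smul (a *: x) y.
Proof. apply: val_inj; exact: na_scalerAl. Qed.
Lemma sscAr (a : K) x y : a *: smul x y = smul x (a *: y).
Proof. apply: val_inj; exact: na_scalerAr. Qed.

Definition SB : nualg K := NUAlg smulA smulDl smulDr sscAl sscAr.

Lemma svval_sum (l : list E1) (F : E1 -> SB) :
  svval (\sum_(e <- l) F e) = \sum_(e <- l) svval (F e).
Proof. elim: l => [|e l IH]; by rewrite ?big_nil ?big_cons //= -IH. Qed.

Lemma spanning (HC : is_rel_cohn_path_algebra r s X cv ce ces) x : InSpan TT x.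
Proof.
case: HC => _ [Hex Hun].
pose bv v : SB := @MkSV _ (proj2 (asbP _) (Qcv v)).
pose be e : SB := @MkSV _ (proj2 (asbP _) (Qce e)).
pose bes e : SB := @MkSV _ (proj2 (asbP _) (Qces e)).
have Hfam : cohn_family r s X bv be bes.
  have [H1 [H2 [H3 [H4 [H5 [H6 [H7 [H8 H9]]]]]]]] := HF.
  split; [move=> v; apply: val_inj; exact: H1|].
  split; [move=> v w Hvw; apply: val_inj; exact: H2|].
  split; [move=> e; apply: val_inj; exact: H3|].
  split; [move=> e; apply: val_inj; exact: H4|].
  split; [move=> e; apply: val_inj; exact: H5|].
  split; [move=> e; apply: val_inj; exact: H6|].
  split; [move=> e; apply: val_inj; exact: H7|].
  split; [move=> e f Hef; apply: val_inj; exact: H8|].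
  move=> v Xv l Hl; apply: val_inj; rewrite /= (svval_sum l (fun e => smul (be e) (bes e))); exact: H9.
have [phi [[Ha [Hz Hm]] [Hv [He Hes]]]] := Hex SB bv be bes Hfam.
have E := Hun C (fun y => svval (phi y)) id.
have Hid : forall y, svval (phi y) = y.
  apply: E.
  - split; first by move=> a b; rewrite Ha.
    split; first by move=> a b; rewrite Hz.
    by move=> a b; rewrite Hm.
  - by split; [|split].
  - by move=> v; rewrite Hv.
  - by move=> e; rewrite He.
  - by move=> e; rewrite Hes.
have := svP (phi x); rewrite Hid => /asbP [] //.
Qed.

Definition Pn (n : nat) (mu : list E1) (u : E0) (nu : list E1) := (length nu <= n)%N.
Definition Real (w : E0) (mu : list E1) (u : E0) (nu : list E1) := nu = nil /\ u = w.
Definition Ghost (L : list E1) (mu : list E1) (u : E0) (nu : list E1) :=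
  exists f nu', nu = f :: nu' /\ In f L.

Lemma span_Pn x : InSpan TT x -> exists n, InSpan (Pn n) x.
Proof.
elim=> [|x1 y1 _ [n1 H1] _ [n2 H2]|k mu u nu _].
- by exists 0%N; constructor.
- exists (maxn n1 n2); constructor.
  + apply: spmon H1 => mu u nu; rewrite /Pn => H; apply: leq_trans H (leq_maxl _ _).
  + apply: spmon H2 => mu u nu; rewrite /Pn => H; apply: leq_trans H (leq_maxr _ _).
- by exists (length nu); constructor; rewrite /Pn.
Qed.

Lemma mulr_cv_Pn n x w : InSpan (Pn n) x -> InSpan (Pn n) (x ** cv w).
Proof.
apply: (@sp_map _ _ (fun z => z ** cv w)); [by move=> *; rewrite /= mDl | by move=> *; rewrite /= mZl | move=> mu u nu H /=].
case: (excluded_middle_informative (w = hv nu u)) => [->|Hw].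
  by rewrite mono_cvr; apply: spmono.
by rewrite mono_cvr0 //; constructor.
Qed.

Lemma Pn0_cv x w : InSpan (Pn 0) x -> InSpan (Real w) (x ** cv w).
Proof.
apply: (@sp_map _ _ (fun z => z ** cv w)); [by move=> *; rewrite /= mDl | by move=> *; rewrite /= mZl | move=> mu u nu H /=].
case: nu H => [|f nu] // _.
case: (excluded_middle_informative (w = u)) => [->|Hw].
  by rewrite (mono_cvr mu u [::]); apply: spmono.
by rewrite mono_cvr0 //; constructor.
Qed.

Lemma mulr_ce_Pn n x e : InSpan (Pn n.+1) x -> InSpan (Pn n) (x ** ce e).
Proof.
apply: (@sp_map _ _ (fun z => z ** ce e)); [by move=> *; rewrite /= mDl | by move=> *; rewrite /= mZl | move=> mu u nu H /=].
case: nu H => [|f nu] H.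
- case: (excluded_middle_informative (u = s e)) => [->|Hu].
    by rewrite mono_cer_nil_eq; apply: spmono.
  by rewrite mono_cer_nil_neq //; constructor.
- case: (excluded_middle_informative (f = e)) => [->|Hf].
  + rewrite mono_cer_cons_eq.
    case: (excluded_middle_informative (r e = hv nu u)) => [->|Hw].
      by rewrite mono_cvr; apply: spmono.
    by rewrite mono_cvr0 //; constructor.
  + by rewrite mono_cer_cons_neq //; constructor.
Qed.

Fixpoint vs (V : list E0) : C := match V with nil => 0 | v :: V' => cv v + vs V' end.

Lemma mono_vs0 mu u nu V : ~ In (hv nu u) V -> mono mu u nu ** vs V = 0.
Proof.
elim: V => [|v V IH] /= H; first by rewrite m0r.
rewrite mDr IH; last tauto. rewrite mono_cvr0 ?addr0 //. move=> E; apply: H; by left.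
Qed.
Lemma mono_vs mu u nu V : NoDup V -> In (hv nu u) V -> mono mu u nu ** vs V = mono mu u nu.
Proof.
elim: V => [|v V IH] //= ND [E|H].
- subst v; rewrite mDr mono_cvr mono_vs0 ?addr0 //. by inversion ND.
- inversion ND; subst. rewrite mDr IH //.
  rewrite mono_cvr0 ?add0r // => E; subst; tauto.
Qed.

Lemma vs_decomp P x : InSpan P x ->
  exists W, forall V, NoDup V -> incl W V -> x = x ** vs V.
Proof.
elim=> [|x1 y1 _ [W1 H1] _ [W2 H2]|k mu u nu _].
- exists nil => V _ _; by rewrite m0l.
- exists (W1 ++ W2) => V ND Hi; rewrite mDl -H1 // -?H2 //.
  + move=> a Ha; apply: Hi; apply: in_or_app; tauto.
  + move=> a Ha; apply: Hi; apply: in_or_app; tauto.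
- exists [:: hv nu u] => V ND Hi; rewrite mZl mono_vs //. apply: Hi; by left.
Qed.

Lemma vs_zero x V : x = x ** vs V -> (forall v, In v V -> x ** cv v = 0) -> x = 0.
Proof.
move=> E H; rewrite E; clear E; elim: V H => [|v V IH] /= H; first by rewrite m0r.
rewrite mDr H ?add0r; [apply: IH => a Ha; apply: H|]; tauto.
Qed.

Lemma exists_vertex P x : InSpan P x -> x <> 0 -> exists w, x ** cv w <> 0.
Proof.
move=> /vs_decomp [W HW] Hx.
apply: NNPP => Hn; apply: Hx.
apply: (@vs_zero x (dd W)).
- apply: HW; [exact: dd_NoDup | move=> a Ha; by apply/dd_In].
- move=> v _; apply: NNPP => H; apply: Hn; by exists v.
Qed.

Lemma sum_zero (l : list E1) (F : E1 -> C) :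
  (forall e, In e l -> F e = 0) -> \sum_(e <- l) F e = 0.
Proof.
elim: l => [|a l IH] H; first by rewrite big_nil.
rewrite big_cons H ?add0r; [apply: IH => e He; apply: H|]; simpl; tauto.
Qed.

Lemma sum_single (l : list E1) (F : E1 -> C) f :
  NoDup l -> In f l -> (forall e, In e l -> e <> f -> F e = 0) ->
  \sum_(e <- l) F e = F f.
Proof.
elim: l => [|a l IH] //= ND Hf H.
inversion ND; subst.
rewrite big_cons.
case: Hf => [Ea|Hf].
- subst a. rewrite sum_zero ?addr0 // => e He; apply: H; first tauto.
  by move=> E; subst.
- rewrite H ?add0r; [apply: IH => // e He; apply: H; tauto | tauto |].
  by move=> E; subst.
Qed.

Lemma decomp P x w : InSpan P x -> exists y z L,
  x ** cv w = y + z /\ InSpan (Real w) y /\ InSpan (Ghost L) z /\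
  (forall f, In f L -> s f = w).
Proof.
elim=> [|x1 y1 _ [a1 [b1 [L1 [E1' [H1 [H1' H1'']]]]]] _ [a2 [b2 [L2 [E2' [H2 [H2' H2'']]]]]]|k mu u nu _].
- exists 0, 0, nil; rewrite m0l addr0; split => //; split; [constructor|split; [constructor|done]].
- exists (a1 + a2), (b1 + b2), (L1 ++ L2); split.
    by rewrite mDl E1' E2' addrACA.
  split; first by constructor.
  split.
  + constructor.
    * apply: spmon H1' => mu u nu [f [nu' [-> Hf]]]; exists f, nu'; split => //; apply: in_or_app; tauto.
    * apply: spmon H2' => mu u nu [f [nu' [-> Hf]]]; exists f, nu'; split => //; apply: in_or_app; tauto.
  + move=> f Hf; case: (in_app_or _ _ _ Hf); auto.
- rewrite mZl.
  case: nu => [|f nu].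
  + case: (excluded_middle_informative (u = w)) => [Eu|Hu].
    * subst u; exists (k *: mono mu w [::]), 0, nil; rewrite addr0 (mono_cvr mu w [::]).
      split => //; split; first by constructor. split; [constructor|done].
    * exists 0, 0, nil; rewrite mono_cvr0 ?scaler0 ?addr0; last by move=> /esym.
      split => //; split; first constructor. split; [constructor|done].
  + case: (excluded_middle_informative (s f = w)) => [Ef|Hf].
    * exists 0, (k *: mono mu u (f :: nu)), [:: f].
      rewrite -Ef (mono_cvr mu u (f :: nu)) add0r. split => //; split; first constructor.
      split; first by constructor; exists f, nu; split => //; left.
      by move=> g [<-|].
    * exists 0, 0, nil; rewrite mono_cvr0 ?scaler0 ?addr0; last by move=> /esym.
      split => //; split; first constructor. split; [constructor|done].
Qed.

Lemma kill_mono mu u f nu w M :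
  NoDup M -> In f M -> (forall e, In e M -> s e = w) ->
  mono mu u (f :: nu) ** (cv w - \sum_(e <- M) ce e ** ces e) = 0.
Proof.
move=> ND Hf HM.
rewrite mBr msumr -(HM f Hf) (mono_cvr mu u (f :: nu)).
rewrite (@sum_single M (fun e => mono mu u (f :: nu) ** (ce e ** ces e)) f ND Hf).
- by rewrite mA mono_cer_cons_eq -mono_cons_ces subrr.
- move=> e He Hne; by rewrite mA mono_cer_cons_neq ?m0l // => /esym.
Qed.

Lemma kill L z w M : InSpan (Ghost L) z -> NoDup M -> incl L M -> (forall e, In e M -> s e = w) ->
  z ** (cv w - \sum_(e <- M) ce e ** ces e) = 0.
Proof.
move=> Hz ND Hi HM; elim: Hz => [|x1 y1 _ H1 _ H2|k mu u nu [f [nu' [-> Hf]]]].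
- by rewrite m0l.
- by rewrite mDl H1 H2 addr0.
- by rewrite mZl (@kill_mono mu u f nu' w M ND) ?scaler0 //; apply: Hi.
Qed.

Hypothesis HXreg : forall v, X v -> regular s v.

Definition Kind w p :=
  p = cv w \/
  (regular s w /\ ~ X w /\ exists l, enumerates_out s w l /\ p = cv w - \sum_(e <- l) ce e ** ces e) \/
  (~ regular s w /\ exists L, NoDup L /\ (forall f, In f L -> s f = w) /\
     p = cv w - \sum_(e <- L) ce e ** ces e).

Definition Final x := exists b w y p,
  x ** b = y ** p /\ y ** p <> 0 /\ InSpan (Real w) y /\ Kind w p.

Lemma sumces_zero x l : (forall e, x ** ce e = 0) -> x ** \sum_(e <- l) ce e ** ces e = 0.
Proof. move=> H; rewrite msumr sum_zero // => e _; by rewrite mA H m0l. Qed.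

Lemma stepA n : forall x w, InSpan (Pn n) x -> x ** cv w <> 0 -> Final x.
Proof.
elim: n => [|n IH] x w Hx Hw.
  exists (cv w), w, (x ** cv w), (cv w); split; first by rewrite -mA g_vv.
  split; first by rewrite -mA g_vv.
  split; first exact: Pn0_cv. by left.
set x' := x ** cv w.
have Hx' : x' ** cv w = x' by rewrite /x' -mA g_vv.
case: (classic (exists e, x' ** ce e <> 0)) => [[e He]|Hne].
  have Hs : InSpan (Pn n) (x' ** ce e) by apply: mulr_ce_Pn; apply: mulr_cv_Pn.
  have He' : x' ** ce e ** cv (r e) <> 0 by rewrite -mA g_er.
  have [b [w' [y [p [E [Hyp [Hy Hk]]]]]]] := IH _ _ Hs He'.
  exists (cv w ** (ce e ** b)), w', y, p; split => //.
  by rewrite !mA.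
have Hz : forall e, x' ** ce e = 0.
  move=> e; apply: NNPP => H; apply: Hne; by exists e.
have [y [z [L [Ed [Hy [Hzz HL]]]]]] := @decomp _ x w Hx.
case: (classic (X w)) => HXw.
  have [l [Hl _]] := HXreg HXw.
  exfalso; apply: Hw; rewrite -/x' -Hx' (g_rel HXw Hl); exact: sumces_zero.
case: (classic (regular s w)) => Hreg.
- have [l [Hl _]] := Hreg.
  pose p := cv w - \sum_(e <- l) ce e ** ces e.
  have Hxp : x' ** p = x' by rewrite /p mBr Hx' sumces_zero // subr0.
  have Hyp : x' ** p = y ** p.
    rewrite /x' Ed mDl (@kill L z w l Hzz) ?addr0 //.
    + by case: Hl.
    + move=> f Hf; case: Hl => _ H; apply/H; exact: HL.
    + move=> e He; case: Hl => _ H; exact/H.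
  exists (cv w ** p), w, y, p; split; first by rewrite mA -Hyp.
  split; first by rewrite -Hyp Hxp.
  split => //; right; left; split => //; split => //; by exists l.
- pose M := dd L.
  pose p := cv w - \sum_(e <- M) ce e ** ces e.
  have Hxp : x' ** p = x' by rewrite /p mBr Hx' sumces_zero // subr0.
  have HM : forall f, In f M -> s f = w by move=> f /dd_In; exact: HL.
  have Hyp : x' ** p = y ** p.
    rewrite /x' Ed mDl (@kill L z w M Hzz) ?addr0 //.
    + exact: dd_NoDup.
    + move=> f Hf; exact/dd_In.
  exists (cv w ** p), w, y, p; split; first by rewrite mA -Hyp.
  split; first by rewrite -Hyp Hxp.
  split => //; right; right; split => //; exists M; split; [exact: dd_NoDup|by split].
Qed.

Local Notation "a +++ b" := (app a b) (at level 60, right associativity).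

Fixpoint vto (mu : list E1) (w : E0) : Prop :=
  match mu with nil => True | e :: mu' => r e = hv mu' w /\ vto mu' w end.

Lemma hv_app a b w : hv (a +++ b) w = hv a (hv b w).
Proof. by case: a. Qed.

Lemma vto_app a b w : vto (a +++ b) w <-> vto a (hv b w) /\ vto b w.
Proof.
elim: a => [|e a IH] /=; first tauto.
rewrite hv_app IH; tauto.
Qed.
Arguments vto_app {a b w}.

Lemma Rleft mu w : R mu (cv w) = cv (hv mu w) ** R mu (cv w).
Proof. case: mu => [|e mu] /=; first by rewrite g_vv. by rewrite mA g_se. Qed.

Lemma R_invalid mu w : ~ vto mu w -> R mu (cv w) = 0.
Proof.
elim: mu => [|e mu IH] //= H.
case: (classic (vto mu w)) => Hv.
- have Hr : hv mu w <> r e by move=> E; apply: H; split.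
  by rewrite Rleft mA g_ev // m0l.
- by rewrite IH // m0r.
Qed.

Lemma GR_pre nu m w b : vto nu w -> Gx (cv w) nu ** R (nu +++ m) b = cv w ** R m b.
Proof.
elim: nu => [|e nu IH] //= [He Hv].
rewrite -mA (mA (ces e)) g_ee He mA Gx_cvr; exact: IH.
Qed.

Lemma GR_nopre nu mu w b : vto nu w -> (length nu <= length mu)%N ->
  (forall m, mu <> nu +++ m) -> Gx (cv w) nu ** R mu b = 0.
Proof.
elim: nu mu => [|e nu IH] mu /=.
  move=> _ _ H; by case: (H mu).
case: mu => [|f mu] //= [He Hv] Hl Hn.
case: (excluded_middle_informative (e = f)) => [Ef|Ne].
- subst f. rewrite -mA (mA (ces e)) g_ee He mA Gx_cvr; apply: IH => // m Em.
  by apply: (Hn m); rewrite Em.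
- by rewrite -mA (mA (ces e)) g_ef // m0l m0r.
Qed.

Definition lsum w (F : list (K * list E1)) : C :=
  foldr (fun t acc => t.1 *: R t.2 (cv w) + acc) 0 F.

Lemma lsum_app w F1 F2 : lsum w (F1 +++ F2) = lsum w F1 + lsum w F2.
Proof. elim: F1 => [|t F IH] /=; first by rewrite add0r. by rewrite IH addrA. Qed.

Lemma real_list w y : InSpan (Real w) y ->
  exists F, y = lsum w F /\ forall t, In t F -> vto t.2 w.
Proof.
elim=> [|x1 y1 _ [F1 [E1' H1]] _ [F2 [E2' H2]]|k mu u nu [-> ->]].
- by exists nil.
- exists (F1 +++ F2); rewrite lsum_app E1' E2'; split => // t Ht; case: (in_app_or _ _ _ Ht); auto.
- case: (classic (vto mu w)) => Hv.
  + exists [:: (k, mu)]; rewrite /= addr0; split => // t [<-|] //.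
  + exists nil; rewrite /mono /= R_invalid // scaler0; split => //.
Qed.

Hypothesis HLc : condition_L r s.

Definition closedp (g : list E1) (v : E0) := g <> nil /\ vto g v /\ hv g v = v.

Lemma vto_chain mu w : vto mu w -> path_chain r s mu.
Proof.
elim: mu => [|e mu IH] //= [He Hv].
case: mu He Hv IH => [|f mu] //= He Hv IH; split => //; exact: IH.
Qed.

Lemma vto_last e mu w d : vto (e :: mu) w -> r (last (e :: mu) d) = w.
Proof.
elim: mu e => [|f mu IH] e [He Hv] //.
have := IH f Hv; by [].
Qed.

Lemma dup_split (g : list E1) : ~ NoDup (map s g) ->
  exists g1 f g2 h g3, g = g1 +++ f :: g2 +++ h :: g3 /\ s f = s h.
Proof.
elim: g => [|a g IH] /= H; first by exfalso; apply: H; constructor.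
case: (classic (In (s a) (map s g))) => Ha.
- have [h [Eh Hh]] := proj1 (in_map_iff _ _ _) Ha.
  have [g2 [g3 E]] := in_split _ _ Hh.
  exists nil, a, g2, h, g3; by rewrite E.
- have Hn : ~ NoDup (map s g) by move=> ND; apply: H; constructor.
  have [g1 [f [g2 [h [g3 [E Hs]]]]]] := IH Hn.
  exists (a :: g1), f, g2, h, g3; by rewrite E.
Qed.

Lemma exit_of_closed n : forall g v, (length g <= n)%N -> closedp g v ->
  exists f e, In f g /\ s e = s f /\ e <> f.
Proof.
elim: n => [|n IH] g v Hlen [Hne [Hv Hh]].
  by case: g Hlen Hne Hv Hh.
case: (classic (NoDup (map s g))) => ND.
- case: g Hlen Hne Hv Hh ND => [|e1 g] // Hlen _ Hv Hh ND.
  have Hc : is_cycle r s (e1 :: g).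
    split; first exact: vto_chain Hv.
    split => //. rewrite (vto_last e1 Hv). by rewrite -Hh.
  have [e [f [Hf [Hs Hef]]]] := HLc Hc.
  by exists f, e.
- have [g1 [f [g2 [h [g3 [E Hs]]]]]] := dup_split ND.
  have Hv' : vto (f :: g2) (s f).
    move: Hv; rewrite E => /vto_app [_].
    change (vto ((f :: g2) +++ h :: g3) v -> vto (f :: g2) (s f)).
    by move=> /vto_app [H _]; rewrite Hs.
  have Hlen' : (length (f :: g2) <= n)%N.
    move: Hlen; rewrite E !length_app /= !length_app /=; lia.
  have [f' [e [Hf' Hr]]] := IH _ _ Hlen' (conj (@nil_cons _ f g2 \o esym) (conj Hv' erefl)).
  exists f', e; split => //.
  rewrite E; apply: in_or_app; right.
  case: Hf' => [<-|H]; first by left.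
  right; apply: in_or_app; by left.
Qed.

Lemma catI (a b c : list E1) : a +++ b = a +++ c -> b = c.
Proof. elim: a => [|x a IH] //= [E]; exact: IH. Qed.

Fixpoint pw (g : list E1) (k : nat) : list E1 :=
  match k with O => nil | S k' => app g (pw g k') end.

Lemma hv_ne g x y : g <> nil -> hv g x = hv g y.
Proof. by case: g. Qed.

Lemma pw_vto g w k : closedp g w -> vto (pw g k) w /\ hv (pw g k) w = w.
Proof.
move=> [Hne [Hv Hh]]; elim: k => [|k [IH1 IH2]] //=.
rewrite vto_app hv_app IH2; tauto.
Qed.

Lemma pw_len g k : length (pw g k) = (k * length g)%N.
Proof. elim: k => [|k IH] //=; by rewrite app_length IH mulSn. Qed.

Lemma pw_Sr g k : pw g k.+1 = pw g k +++ g.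
Proof.
elim: k => [|k IH]; first by rewrite /= !app_nil_r.
change (g +++ pw g k.+1 = (g +++ pw g k) +++ g); by rewrite IH app_assoc.
Qed.

Lemma pw_prefix g l : (exists m, g +++ l = l +++ m) -> forall k, exists m, pw g k +++ l = l +++ m.
Proof.
move=> [m Hm]; elim=> [|k [mk Hk]]; first by exists nil; rewrite app_nil_r.
exists (m +++ mk); by rewrite /= -app_assoc Hk app_assoc Hm -app_assoc.
Qed.

Lemma prefix_long (a b c d : list E1) : a +++ b = c +++ d -> (length c <= length a)%N ->
  exists m, a = c +++ m.
Proof.
elim: c a => [|x c IH] a /=; first by exists a.
case: a => [|y a] //= E Hl.
case: E => -> E; have [m ->] := IH _ E Hl; by exists m.
Qed.

Lemma escape_one g w l0 t0 : closedp g w -> vto l0 t0 -> hv l0 t0 = w ->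
  exists d t, vto (l0 +++ d) t /\ hv (l0 +++ d) t = w /\ forall m, g +++ l0 +++ d <> (l0 +++ d) +++ m.
Proof.
move=> Hc Hv0 Hh0.
case: (classic (exists m, g +++ l0 = l0 +++ m)) => Hp; last first.
  exists nil, t0; rewrite !app_nil_r; refine (conj _ (conj _ _)) => // m E; apply: Hp; by exists m.
have [f [e [Hf [Hs Hef]]]] := @exit_of_closed (length g) g w (leqnn _) Hc.
have [m' Hm'] := pw_prefix Hp (length l0).+1.
have Hl : (length l0 <= length (pw g (length l0).+1))%N.
  rewrite pw_len; case: Hc => Hne _; case: g Hne Hm' {Hp Hf} => [|a g] // _ _ /=.
  nia.
have [rho Erho] := prefix_long Hm' Hl.
have [g1 [g2 Eg]] := in_split _ _ Hf.
exists (rho +++ g1 +++ [:: e]), (r e).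
have Hlam : l0 +++ rho +++ g1 +++ [:: e] = pw g (length l0).+1 +++ g1 +++ [:: e] by rewrite Erho app_assoc.
rewrite Hlam.
have [Hpv Hph] := pw_vto (length l0).+1 Hc.
case: Hc => [Hne [Hv Hh]].
have Hvg1 : vto g1 (s f).
  by move: Hv; rewrite Eg => /vto_app [].
have Hhg1 : hv g1 (s f) = w by move: Hh; rewrite Eg hv_app.
split.
  apply/vto_app; rewrite hv_app /= Hs Hhg1; split => //.
  apply/vto_app; rewrite /= Hs; tauto.
split.
  change (hv ((g +++ pw g (length l0)) +++ g1 +++ [:: e]) (r e) = w).
  by rewrite -app_assoc hv_app (hv_ne _ w Hne) Hh.
move=> m E.
set k1 := (length l0).+1 in E *.
have Eq1 : pw g k1 +++ (g +++ g1 +++ [:: e]) = pw g k1 +++ (g1 +++ [:: e] +++ m).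
  rewrite app_assoc -pw_Sr [pw g k1.+1]/= -app_assoc E. by rewrite -!app_assoc.
move/app_inv_head: Eq1; rewrite Eg -app_assoc => /app_inv_head /= [Efe _]; by apply: Hef.
Qed.

Lemma escape_all w (G : list (list E1)) : (forall g, In g G -> closedp g w) ->
  exists l t, vto l t /\ hv l t = w /\ forall g, In g G -> forall m, g +++ l <> l +++ m.
Proof.
elim: G => [|g G IH] HG.
  by exists nil, w.
have [l0 [t0 [Hv0 [Hh0 H0]]]] := IH (fun g' Hg' => HG g' (or_intror Hg')).
have [d [t [Hv [Hh Hn]]]] := escape_one (HG g (or_introl erefl)) Hv0 Hh0.
exists (l0 +++ d), t; split => //; split => //.
move=> g' Hg' m E; case: Hg' => [Eg|Hg'].
- subst g'; exact: (Hn m E).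
- have E' : (g' +++ l0) +++ d = l0 +++ (d +++ m) by rewrite -app_assoc E -app_assoc.
  have Hle : (length l0 <= length (g' +++ l0))%N by rewrite length_app; lia.
  have [m'' Hm''] := prefix_long E' Hle.
  by apply: (H0 g' Hg' m'').
Qed.

Variable Z : C -> Prop.
Hypothesis HZl : forall a x, Z x -> Z (a ** x).
Hypothesis HZr : forall x b, Z x -> Z (x ** b).
Hypothesis HZv : forall c v, c != 0 -> ~ Z (c *: cv v).
Hypothesis HZq : forall c w l, c != 0 -> regular s w -> ~ X w -> enumerates_out s w l ->
  ~ Z (c *: (cv w - \sum_(e <- l) ce e ** ces e)).

Definition gsum w (G : list (K * list E1)) : C :=
  foldr (fun t acc => t.1 *: (cv w ** R t.2 (cv w)) + acc) 0 G.

Lemma R_app mu mu' a : R (mu +++ mu') a = R mu (R mu' a).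
Proof. elim: mu => [|e mu IH] //=; by rewrite IH. Qed.

Lemma sum_eq_in (l : list E1) (F G : E1 -> C) : (forall e, In e l -> F e = G e) ->
  \sum_(e <- l) F e = \sum_(e <- l) G e.
Proof.
elim: l => [|a l IH] H; first by rewrite !big_nil.
rewrite !big_cons H; [rewrite IH // => e He; apply: H|]; simpl; tauto.
Qed.

Lemma K1_case w c G : c != 0 -> (forall t, In t G -> closedp t.2 w) ->
  Z ((c *: cv w + gsum w G) ** cv w) -> False.
Proof.
move=> Hc HG HZ.
have HG' : forall g, In g (map snd G) -> closedp g w.
  move=> g /in_map_iff [t [<- Ht]]; exact: HG.
have [l [t [Hvt [Hht Hpre]]]] := escape_all HG'.
pose Lm := Gx (cv t) l; pose Rm := R l (cv t).
have HR : cv w ** Rm = Rm by rewrite /Rm {2}Rleft Hht.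
have HL : Lm ** cv w = Lm by rewrite /Lm -{1}Hht Gx_cvr.
have HLR : Lm ** Rm = cv t.
  have := @GR_pre l [::] t (cv t) Hvt; rewrite app_nil_r /= g_vv; exact.
have Hsum : forall G', (forall t, In t G' -> In t G) -> Lm ** (gsum w G' ** Rm) = 0.
  elim=> [|[k g] G' IH] HG''; first by rewrite /= m0l m0r.
  rewrite /= mDl mDr IH; last by move=> t' Ht'; apply: HG''; right.
  rewrite mZl mZr addr0 -mA -R_mulr HR -R_app mA HL.
  have [Hne [Hv Hh]] := HG (k, g) (HG'' _ (or_introl erefl)).
  rewrite GR_nopre ?scaler0 //.
  - by rewrite length_app; lia.
  - move=> m E; apply: (Hpre g _ m E); apply/in_map_iff; exists (k, g); split; first done.
    exact: (HG'' _ (or_introl erefl)).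
apply: (@HZv c t Hc).
have -> : c *: cv t = Lm ** ((c *: cv w + gsum w G) ** cv w ** Rm).
  rewrite -mA HR mDl mDr Hsum // mZl mZr HR HLR addr0 //.
by apply: HZl; apply: HZr.
Qed.

Lemma enum_props w l : enumerates_out s w l -> NoDup l /\ forall e, In e l <-> s e = w.
Proof. by []. Qed.

Lemma K2_case w l c G : c != 0 -> regular s w -> ~ X w -> enumerates_out s w l ->
  (forall t, In t G -> closedp t.2 w) ->
  Z ((c *: cv w + gsum w G) ** (cv w - \sum_(e <- l) ce e ** ces e)) -> False.
Proof.
move=> Hc Hreg HX Hl HG HZ.
have [ND Hin] := enum_props Hl.
set q := cv w - \sum_(e <- l) ce e ** ces e.
have qcv : q ** cv w = q.
  rewrite /q mBl g_vv msuml; congr (_ - _); apply: sum_eq_in => e He.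
  by rewrite -mA -(proj1 (Hin e) He) g_ess.
have qce : forall f, s f = w -> q ** ce f = 0.
  move=> f Hf; have Hfl : In f l by apply/Hin.
  rewrite /q mBl -Hf g_se msuml.
  rewrite (@sum_single l (fun e => ce e ** ces e ** ce f) f ND Hfl).
    by rewrite -mA g_ee g_er subrr.
  by move=> e He Hef; rewrite -mA g_ef ?m0r.
have qq : q ** q = q.
  rewrite {2}/q mBr qcv msumr sum_zero ?subr0 // => e He.
  by rewrite mA qce ?m0l //; apply/Hin.
have Hsum : forall G', (forall t, In t G' -> In t G) -> q ** gsum w G' = 0.
  elim=> [|[k g] G' IH] HG''; first by rewrite /= m0r.
  rewrite /= mDr IH; last by move=> t' Ht'; apply: HG''; right.
  have [Hne [Hv Hh]] := HG (k, g) (HG'' _ (or_introl erefl)).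
  rewrite mZr mA qcv addr0.
  case: g Hne Hv Hh {HG''} => [|f g] // _ _ /= Hh.
  by rewrite mA qce ?m0l ?scaler0.
apply: (HZq Hc Hreg HX Hl).
have -> : c *: q = q ** ((c *: cv w + gsum w G) ** q).
  by rewrite (mA q _ q) (mDr q) Hsum // addr0 mZr qcv mZl qq.
by apply: HZl.
Qed.

Fixpoint cfilter (P : E1 -> Prop) (l : list E1) : list E1 :=
  match l with
  | nil => nil
  | a :: l' => if excluded_middle_informative (P a) then a :: cfilter P l' else cfilter P l'
  end.
Lemma cfilter_In P l x : In x (cfilter P l) <-> In x l /\ P x.
Proof.
elim: l => [|a l IH] /=; first tauto.
case: excluded_middle_informative => H /=; rewrite IH; split.
- case=> [<-|]; tauto.
- case=> [[<-|Hx] Px]; tauto.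
- tauto.
- case=> [[<-|Hx] Px]; tauto.
Qed.

Lemma K3_case w L c G : c != 0 -> ~ regular s w -> NoDup L -> (forall f, In f L -> s f = w) ->
  (forall t, In t G -> closedp t.2 w) ->
  Z ((c *: cv w + gsum w G) ** (cv w - \sum_(e <- L) ce e ** ces e)) -> False.
Proof.
move=> Hc Hreg ND HL HG HZ.
pose M := flat_map (fun t => firstn 1 t.2) G.
have HM : forall k f g, In (k, f :: g) G -> In f M.
  move=> k f g H; apply/in_flat_map; exists (k, f :: g); split => //; by left.
case: (classic (exists e, s e = w /\ ~ In e L /\ ~ In e M)) => [[e [Hse [HeL HeM]]]|Hno].
- set p := cv w - \sum_(e <- L) ce e ** ces e.
  have pce : p ** ce e = ce e.
    rewrite /p mBl -Hse g_se msuml sum_zero ?subr0 // => f Hf.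
    by rewrite -mA g_ef ?m0r // => E; subst f.
  have Hsum : forall G', (forall t, In t G' -> In t G) -> ces e ** gsum w G' = 0.
    elim=> [|[k g] G' IH] HG''; first by rewrite /= m0r.
    rewrite /= mDr IH; last by move=> t' Ht'; apply: HG''; right.
    have [Hne [Hv Hh]] := HG (k, g) (HG'' _ (or_introl erefl)).
    rewrite mZr mA -Hse g_ess addr0.
    have Hin := HG'' _ (or_introl erefl).
    case: g Hne Hv Hh Hin {HG''} => [|f g] // _ _ _ Hin /=.
    rewrite mA g_ef ?m0l ?scaler0 // => E; subst f; apply: HeM; exact: HM Hin.
  apply: (@HZv c (r e) Hc).
  have -> : c *: cv (r e) = ces e ** ((c *: cv w + gsum w G) ** p ** ce e).
    by rewrite -mA pce mA mDr Hsum // addr0 mZr -Hse g_ess mZl g_ee.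
  by apply: HZl; apply: HZr.
- case: L ND HL HZ Hno => [|f L] ND HL HZ Hno.
  + by rewrite big_nil subr0 in HZ; apply: (K1_case Hc HG HZ).
  + apply: Hreg.
    pose lo := dd (cfilter (fun e => s e = w) ((f :: L) +++ M)).
    exists lo; split.
    * split; first exact: dd_NoDup.
      move=> e; rewrite dd_In cfilter_In; split; first tauto.
      move=> He; split => //; apply: in_or_app.
      apply: NNPP => H; apply: Hno; exists e; split => //; tauto.
    * have : In f lo.
        rewrite /lo dd_In cfilter_In; split; [apply: in_or_app; left; by left|].
        apply: HL; by left.
      by case: lo.
Qed.

Lemma exists_min (F : list (K * list E1)) : F <> nil ->
  exists t1, In t1 F /\ forall t, In t F -> (length t1.2 <= length t.2)%N.
Proof.
elim: F => [|a F IH] // _.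
case: (classic (F = nil)) => [->|HFn].
  exists a; split; first by left. by move=> t [<-|].
have [t1 [Ht1 Hm]] := IH HFn.
case: (leqP (length a.2) (length t1.2)) => H.
- exists a; split; first by left.
  move=> t [<-|Ht] //; apply: leq_trans H (Hm _ Ht).
- exists t1; split; first by right.
  move=> t [<-|Ht]; [exact: ltnW | exact: Hm].
Qed.

Fixpoint tfilter (P : K * list E1 -> Prop) (F : list (K * list E1)) :=
  match F with
  | nil => nil
  | a :: F' => if excluded_middle_informative (P a) then a :: tfilter P F' else tfilter P F'
  end.

Lemma tfilter_In P F x : In x (tfilter P F) -> In x F /\ P x.
Proof.
elim: F => [|a F IH] //=.
case: excluded_middle_informative => H /=; [case=> [<-|/IH]|move/IH]; tauto.
Qed.

Lemma tfilter_len P F : (length (tfilter P F) <= length F)%N.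
Proof.
elim: F => [|a F IH] //=; case: excluded_middle_informative => H /=; lia.
Qed.

Lemma tfilter_lt P F x : In x F -> ~ P x -> (length (tfilter P F) < length F)%N.
Proof.
elim: F => [|a F IH] //= Hx Hn.
case: excluded_middle_informative => H /=.
- case: Hx => [E|Hx]; first by subst a.
  have := IH Hx Hn; lia.
- have := tfilter_len P F; lia.
Qed.

Lemma lsum_split w P F :
  lsum w F = lsum w (tfilter P F) + lsum w (tfilter (fun t => ~ P t) F).
Proof.
elim: F => [|a F IH] /=; first by rewrite addr0.
case: excluded_middle_informative => H1; case: excluded_middle_informative => H2 //=.
- by rewrite IH addrA.
- by rewrite IH addrCA.
Qed.

Definition csum (F : list (K * list E1)) : K := foldr (fun t acc => t.1 + acc) 0 F.

Lemma lsum_const w mu F : (forall t, In t F -> t.2 = mu) -> lsum w F = csum F *: R mu (cv w).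
Proof.
elim: F => [|a F IH] H /=; first by rewrite scale0r.
rewrite IH; last by move=> t Ht; apply: H; right.
by rewrite (H a (or_introl erefl)) scalerDl.
Qed.

Lemma skipn_app_len (a m : list E1) : skipn (length a) (a +++ m) = m.
Proof. by elim: a. Qed.

Fixpoint mkG w (mu1 : list E1) (F : list (K * list E1)) : list (K * list E1) :=
  match F with
  | nil => nil
  | t :: F' =>
    if excluded_middle_informative (exists m, t.2 = mu1 +++ m /\ hv m w = w)
    then (t.1, skipn (length mu1) t.2) :: mkG w mu1 F'
    else mkG w mu1 F'
  end.

Lemma G_lsum w mu1 F : vto mu1 w ->
  (forall t, In t F -> t.2 <> mu1 /\ (length mu1 <= length t.2)%N) ->
  Gx (cv w) mu1 ** lsum w F = gsum w (mkG w mu1 F).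
Proof.
move=> Hv; elim: F => [|t F IH] H /=; first by rewrite m0r.
rewrite mDr mZr IH; last by move=> t' Ht'; apply: H; right.
have [Hne Hle] := H t (or_introl erefl).
case: excluded_middle_informative => [[m [Em Hm]]|Hn] /=.
- by rewrite Em GR_pre // skipn_app_len.
- case: (classic (exists m, t.2 = mu1 +++ m)) => [[m Em]|Hn'].
  + rewrite Em GR_pre // Rleft mA g_vw ?m0l ?scaler0 ?add0r // => E.
    apply: Hn; exists m; split => //.
  + rewrite GR_nopre ?scaler0 ?add0r // => m E; apply: Hn'; by exists m.
Qed.

Lemma mkG_closed w mu1 F : (forall t, In t F -> vto t.2 w /\ t.2 <> mu1) ->
  forall t, In t (mkG w mu1 F) -> closedp t.2 w.
Proof.
elim: F => [|a F IH] H t //=.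
case: excluded_middle_informative => [[m [Em Hm]]|Hn] /=; last first.
  apply: IH => t' Ht'; apply: H; by right.
case=> [Et|Ht]; last by apply: IH => // t' Ht'; apply: H; right.
subst t; rewrite /= Em skipn_app_len.
have [Hv Hne] := H a (or_introl erefl).
split; last split => //.
- move=> E; subst m; apply: Hne; by rewrite Em app_nil_r.
- by move: Hv; rewrite Em => /vto_app [].
Qed.

Lemma stepB w p : Kind w p -> forall N F, (length F <= N)%N ->
  (forall t, In t F -> vto t.2 w) -> Z (lsum w F ** p) -> lsum w F ** p <> 0 -> False.
Proof.
move=> Hk; elim=> [|N IH] F Hlen HFv HZ Hne.
  by case: F Hlen HFv HZ Hne => // _ _ _; rewrite /= m0l.
case: (classic (F = nil)) => [EF|HFn].
  by subst F; apply: Hne; rewrite /= m0l.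
have [t1 [Ht1 Hmin]] := exists_min HFn.
set mu1 := t1.2.
pose Feq := tfilter (fun t => t.2 = mu1) F.
pose Fne := tfilter (fun t => ~ (t.2 = mu1)) F.
have E : lsum w F = csum Feq *: R mu1 (cv w) + lsum w Fne.
  rewrite (lsum_split w (fun t => t.2 = mu1)) (@lsum_const w mu1 Feq) //.
  by move=> t /tfilter_In [].
case: (classic (csum Feq = 0)) => Hc.
- rewrite E Hc scale0r add0r in HZ Hne.
  apply: (IH Fne) => //.
  + have := @tfilter_lt (fun t => ~ (t.2 = mu1)) F t1 Ht1; rewrite -/Fne.
    move=> H; have := H (fun H' => H' erefl); lia.
  + move=> t /tfilter_In [Ht _]; exact: HFv.
- have Hv1 : vto mu1 w by apply: HFv.
  pose G := mkG w mu1 Fne.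
  have HG : forall t, In t G -> closedp t.2 w.
    apply: mkG_closed => t /tfilter_In [Ht Hne']; split => //; exact: HFv.
  have EG : Gx (cv w) mu1 ** lsum w F = csum Feq *: cv w + gsum w G.
    rewrite E mDr mZr G_lsum //.
    + have := @GR_pre mu1 [::] w (cv w) Hv1; rewrite app_nil_r /= g_vv => ->; by [].
    + move=> t /tfilter_In [Ht Hne']; split => //; exact: Hmin.
  have HZ' : Z ((csum Feq *: cv w + gsum w G) ** p).
    by rewrite -EG -mA; apply: HZl.
  have Hc' : csum Feq != 0 by apply/eqP.
  case: Hk => [Ep|[[Hreg [HX [l [Hl Ep]]]]|[Hreg [L [ND [HL Ep]]]]]]; subst p.
  + exact: (K1_case Hc' HG HZ').
  + exact: (K2_case Hc' Hreg HX Hl HG HZ').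
  + exact: (K3_case Hc' Hreg ND HL HG HZ').
Qed.

Lemma q_idem w l : enumerates_out s w l ->
  (cv w - \sum_(e <- l) ce e ** ces e) ** (cv w - \sum_(e <- l) ce e ** ces e) =
  cv w - \sum_(e <- l) ce e ** ces e.
Proof.
move=> Hl; have [ND Hin] := enum_props Hl.
set q := cv w - \sum_(e <- l) ce e ** ces e.
have qcv : q ** cv w = q.
  rewrite /q mBl g_vv msuml; congr (_ - _); apply: sum_eq_in => e He.
  by rewrite -mA -(proj1 (Hin e) He) g_ess.
have qce : forall f, s f = w -> q ** ce f = 0.
  move=> f Hf; have Hfl : In f l by apply/Hin.
  rewrite /q mBl -Hf g_se msuml.
  rewrite (@sum_single l (fun e => ce e ** ces e ** ce f) f ND Hfl).
    by rewrite -mA g_ee g_er subrr.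
  by move=> e He Hef; rewrite -mA g_ef ?m0r.
rewrite {2}/q mBr qcv msumr sum_zero ?subr0 // => e He.
by rewrite mA qce ?m0l //; apply/Hin.
Qed.
End Gen.

Theorem mainTheorem5 (K : fieldType) (E0 E1 : Type) (r s : E1 -> E0)
    (X : E0 -> Prop)
    (HL : condition_L r s)
    (HX : forall v, X v -> regular s v)
    (C : nualg K) (cv : E0 -> C) (ce ces : E1 -> C)
    (HC : is_rel_cohn_path_algebra r s X cv ce ces)
    (A : nuring) (pi : nualg_ring C -> A)
    (Hpi : ring_hom pi)
    (Hu : forall u : E0, pi (cv u) <> 0)
    (HY : forall v : E0, regular s v -> ~ X v ->
          forall l, enumerates_out s v l ->
          pi (cv v - \sum_(e <- l) na_mul (ce e) (ces e)) <> 0) :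
  injective pi.
Proof.
have HF : cohn_family r s X cv ce ces by case: HC.
have [Hadd Hmul] := Hpi.
have A0l : forall y : A, nr_mul 0 y = 0.
  move=> y; have H := @nr_mulDl A 0 0 y; rewrite addr0 in H.
  apply: (addrI (nr_mul 0 y)); by rewrite addr0 -H.
have A0r : forall y : A, nr_mul y 0 = 0.
  move=> y; have H := @nr_mulDr A y 0 0; rewrite addr0 in H.
  apply: (addrI (nr_mul y 0)); by rewrite addr0 -H.
have pi0 : pi 0 = 0.
  have H := Hadd 0 0; rewrite addr0 in H.
  apply: (addrI (pi 0)); by rewrite addr0 -H.
have piN : forall x, pi (- x) = - pi x.
  move=> x; apply/eqP; rewrite -subr_eq0 opprK -Hadd addNr pi0 //.
have HZl : forall a x : C, pi x = 0 -> pi (na_mul a x) = 0.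
  move=> a x H; by rewrite (Hmul a x) H A0r.
have HZr : forall x b : C, pi x = 0 -> pi (na_mul x b) = 0.
  move=> x b H; by rewrite (Hmul x b) H A0l.
have unscale : forall (c : K) (y : C), c != 0 -> na_mul y y = y -> pi (c *: y) = 0 -> pi y = 0.
  move=> c y Hc Hyy H.
  have -> : y = na_mul (c^-1 *: y) (c *: y).
    by rewrite -na_scalerAl -na_scalerAr Hyy scalerA mulVf // scale1r.
  exact: HZl.
have HZv : forall (c : K) v, c != 0 -> ~ pi (c *: cv v) = 0.
  move=> c v Hc H; apply: (Hu v); apply: (unscale c) => //.
  by case: HF.
have HZq : forall (c : K) w l, c != 0 -> regular s w -> ~ X w -> enumerates_out s w l ->
  ~ pi (c *: (cv w - \sum_(e <- l) na_mul (ce e) (ces e))) = 0.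
  move=> c w l Hc Hreg HXw Hl H; apply: (HY w Hreg HXw l Hl); apply: (unscale c) => //.
  exact: (q_idem HF Hl).
move=> x y Hxy.
apply/eqP; rewrite -subr_eq0; apply/eqP.
have Hz : pi (x - y) = 0 by rewrite Hadd piN Hxy subrr.
apply: NNPP => Hz0.
have Hsp := spanning HF HC (x - y).
have [n Hn] := span_Pn Hsp.
have [w Hw] := exists_vertex HF Hn Hz0.
have [b [w' [yy [p [E [Hne [Hy Hk]]]]]]] := stepA HF HX Hn Hw.
have [F [EF HFv]] := real_list HF Hy.
apply: (@stepB _ _ _ _ _ _ _ _ _ _ HF HL (fun t => pi t = 0) HZl HZr HZv HZq w' p Hk (length F) F (leqnn _) HFv).
- rewrite /= -EF -E; exact: HZr.
- by rewrite -EF.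
Qed.
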